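(* Let $m\ge n\ge k$ be positive integers, $A\in\mathbb{R}^{m\times n}$ with $A^TA=I_n$, $x^*\in\mathbb{R}^n$ with support $S^*$, $|S^*|\le k$, and $y=Ax^*$ (i.e. $e=0$). Then for every initialization $\mathcal{X}^0$ and $\eta>0$ of SEA, $B=\sup_{t\in\mathbb{N}}\|u^t-\eta A^T(Ax^t-y)\|_\infty=0$. As a consequence, for every such $x^*$, for the initialization $\mathcal{X}^0=0$ and every $\eta>0$, if SEA is run for $N>k+1$ iterations, then $S^*\subseteq S^{t_{BEST}}$ and $x^{t_{BEST}}=x^*$.
   Context: $S^*=\{i:x^*_i\neq0\}$. For $v\in\mathbb{R}^n$, $\mathrm{largest}_k(v)$ is the set of indices of the $k$ entries of $v$ with largest absolute value (ties broken by selecting the highest indices). For $S\subseteq\{1,\dots,n\}$, $A_S$ is the submatrix of columns indexed by $S$, $v_S$ the restriction of a vector to $S$, $A_S^\dagger$ the Moore–Penrose pseudoinverse of $A_S$. SEA with initialization $\mathcal{X}^0$ and step size $\eta$ generates, for $t=0,1,2,\dots$: $S^t=\mathrm{largest}_k(\mathcal{X}^t)$; $x^t_i=0$ for $i\notin S^t$ and $x^t_{S^t}=A_{S^t}^\dagger y$; $\mathcal{X}^{t+1}=\mathcal{X}^t-\eta A^T(Ax^t-y)$. When run for $N$ iterations (computing $x^0,\dots,x^{N-1}$), SEA outputs $x^{t_{BEST}}$ with $t_{BEST}\in\arg\min_{t'\in\{0,\dots,N-1\}}\|Ax^{t'}-y\|_2$. The oracle direction is $u^t_i=-\eta x^*_i$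 if $i\in S^*\setminus S^t$ and $u^t_i=0$ otherwise. *)

(* Defs.v *)
From HB Require Import structures.
From mathcomp Require Import all_boot all_order all_algebra.
From mathcomp Require Import all_classical all_reals.
From mathcomp Require Import ereal.
Set Implicit Arguments. Unset Strict Implicit. Unset Printing Implicit Defensive.
Import Order.TTheory GRing.Theory Num.Theory.
Local Open Scope ring_scope.
Local Open Scope classical_set_scope.

(* Moore-Penrose conditions (real matrices: conjugate transpose = transpose) *)
Definition is_mp_pinv (R : realType) (p q : nat) (M : 'M[R]_(p, q)) (P : 'M[R]_(q, p)) : Prop :=
  [/\ M *m P *m M = M, P *m M *m P = P, (M *m P)^T = M *m P & (P *m M)^T = P *m M].

(* The Moore-Penrose pseudoinverse: the (unique, always existing) matrix satisfying
   the Penrose conditions. *)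
Definition pinv (R : realType) (p q : nat) (M : 'M[R]_(p, q)) : 'M[R]_(q, p) :=
  xget 0 [set P | is_mp_pinv M P].

Definition vsupp (R : realType) (n : nat) (x : 'cV[R]_n) : {set 'I_n} :=
  [set i | x i 0 != 0].

Definition beats (R : realType) (n : nat) (v : 'cV[R]_n) (j i : 'I_n) : bool :=
  (`|v i 0| < `|v j 0|) || ((`|v j 0| == `|v i 0|) && (i < j)%N).

(* largest_k(v): the k indices of largest absolute value, ties broken toward
   higher indices: i is selected iff fewer than k indices beat it. *)
Definition largest (R : realType) (k n : nat) (v : 'cV[R]_n) : {set 'I_n} :=
  [set i | (#|[set j | beats v j i]| < k)%N].

(* A_S : columns of A indexed by S (in increasing order) *)
Definition subcols (R : realType) (m n : nat) (A : 'M[R]_(m, n)) (S : {set 'I_n})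
  : 'M[R]_(m, #|S|) := colsub (@enum_val _ (mem S)) A.

Definition restricted_ls (R : realType) (m n : nat) (A : 'M[R]_(m, n)) (y : 'cV[R]_m)
  (S : {set 'I_n}) : 'cV[R]_n :=
  let v := pinv (subcols A S) *m y in
  \col_i \sum_(j < #|S|) (if enum_val j == i then v j 0 else 0).

Fixpoint sea_X (R : realType) (m n k : nat) (A : 'M[R]_(m, n)) (y : 'cV[R]_m)
  (eta : R) (X0 : 'cV[R]_n) (t : nat) : 'cV[R]_n :=
  match t with
  | 0 => X0
  | t'.+1 =>
      let Xt := sea_X k A y eta X0 t' in
      Xt - eta *: (A^T *m (A *m restricted_ls A y (largest k Xt) - y))
  end.

Definition sea_S (R : realType) (m n k : nat) (A : 'M[R]_(m, n)) (y : 'cV[R]_m)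
  (eta : R) (X0 : 'cV[R]_n) (t : nat) : {set 'I_n} :=
  largest k (sea_X k A y eta X0 t).

Definition sea_x (R : realType) (m n k : nat) (A : 'M[R]_(m, n)) (y : 'cV[R]_m)
  (eta : R) (X0 : 'cV[R]_n) (t : nat) : 'cV[R]_n :=
  restricted_ls A y (sea_S k A y eta X0 t).

Definition oracle_u (R : realType) (n : nat) (eta : R) (xs : 'cV[R]_n) (S : {set 'I_n})
  : 'cV[R]_n :=
  \col_i (if (i \in vsupp xs) && (i \notin S) then - (eta * xs i 0) else 0).

Definition norminf (R : realType) (n : nat) (v : 'cV[R]_n) : R :=
  \big[Num.max/0]_i `|v i 0|.

Definition norm2 (R : realType) (n : nat) (v : 'cV[R]_n) : R :=
  Num.sqrt (\sum_i v i 0 ^+ 2).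

(* Main.v *)
Require Import Defs.
From HB Require Import structures.
From mathcomp Require Import all_boot all_order all_algebra.
From mathcomp Require Import all_classical all_reals.
From mathcomp Require Import ereal.
Import Order.TTheory GRing.Theory Num.Theory.
Local Open Scope ring_scope.
Local Open Scope classical_set_scope.

Lemma pinv_orth (R : realType) p q (M : 'M[R]_(p,q)) :
  M^T *m M = 1%:M -> Defs.pinv M = M^T.
Proof.
move=> hM; rewrite /Defs.pinv; case: (xgetP 0 [set P | is_mp_pinv M P]) => [P _ [h1 h2 h3 h4]| H]; last first.
  exfalso; apply: (H M^T); split.
  - by rewrite -mulmxA hM mulmx1.
  - by rewrite hM mul1mx.
  - by rewrite trmx_mul trmxK.
  - by rewrite hM trmx1.
have PM : P *m M = 1%:M.
  have E : M^T *m (M *m P *m M) = M^T *m M by rewrite h1.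
  by rewrite !mulmxA hM mul1mx in E.
have MP : M *m P = P^T *m M^T by rewrite -h3 trmx_mul.
rewrite -[P]mul1mx -hM -mulmxA MP mulmxA -trmx_mul PM trmx1 mul1mx //.
Qed.

Section Orth.
Variables (R : realType) (m n : nat) (A : 'M[R]_(m, n)).
Hypothesis hA : A^T *m A = 1%:M.

Lemma trcolsub n' (f : 'I_n' -> 'I_n) : (colsub f A)^T = rowsub f A^T.
Proof. by apply/matrixP => i j; rewrite !mxE. Qed.

Lemma subcols_orth (S : {set 'I_n}) : (subcols A S)^T *m subcols A S = 1%:M.
Proof.
rewrite /subcols trcolsub -mxsub_mul hA.
apply/matrixP => i j; rewrite !mxE (inj_eq enum_val_inj) //.
Qed.

Lemma restricted_lsE (xs : 'cV[R]_n) (S : {set 'I_n}) :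
  restricted_ls A (A *m xs) S = \col_i (if i \in S then xs i 0 else 0).
Proof.
rewrite /restricted_ls pinv_orth ?subcols_orth //.
rewrite /subcols trcolsub mulmxA mul_rowsub_mx hA -rowsubE.
apply/matrixP => i j; rewrite !mxE.
under eq_bigr => l _ do rewrite mxE.
rewrite -(big_enum_val (fun s => if s == i then xs s 0 else 0)).
case: (boolP (i \in S)) => iS.
  rewrite (bigD1 i) //= eqxx big1 ?addr0 // => l /andP[_ /negbTE ->] //.
rewrite big1 // => l lS; case: eqP => // li; subst; by rewrite lS in iS.
Qed.

Lemma grad_eq (x xs : 'cV[R]_n) : A^T *m (A *m x - A *m xs) = x - xs.
Proof. by rewrite mulmxBr !mulmxA hA !mul1mx. Qed.

End Orth.

Section Main.
Local Close Scope classical_set_scope.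
Variables (R : realType) (m n k : nat) (A : 'M[R]_(m, n)) (xs : 'cV[R]_n).
Hypothesis hA : A^T *m A = 1%:M.
Hypothesis hk : (#|vsupp xs| <= k)%N.

Definition xSf (S : {set 'I_n}) : 'cV[R]_n := \col_i (if i \in S then xs i 0 else 0).

Lemma sea_xE eta X0 t : sea_x k A (A *m xs) eta X0 t = xSf (sea_S k A (A *m xs) eta X0 t).
Proof. by rewrite /sea_x restricted_lsE. Qed.

Lemma sea_XS eta X0 t i : sea_X k A (A *m xs) eta X0 t.+1 i 0 =
  sea_X k A (A *m xs) eta X0 t i 0
  - eta * ((if i \in sea_S k A (A *m xs) eta X0 t then xs i 0 else 0) - xs i 0).
Proof.
rewrite /= restricted_lsE // grad_eq // !mxE /sea_S.
done.
Qed.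


Local Notation X eta t := (sea_X k A (A *m xs) eta 0 t).
Local Notation S eta t := (sea_S k A (A *m xs) eta 0 t).
Local Notation Z eta t := [set i | sea_X k A (A *m xs) eta 0 t i 0 != 0].

Lemma Z_supp eta t : Z eta t \subset vsupp xs.
Proof.
elim: t => [|t IH]; apply/fintype.subsetP => i; rewrite !inE.
  by rewrite /= mxE eqxx.
rewrite sea_XS.
case: (eqVneq (xs i 0) 0) => // xi0.
rewrite xi0 if_same subrr mulr0 subr0 => H.
by move/fintype.subsetP: IH => /(_ i); rewrite !inE H xi0 eqxx => /(_ isT).
Qed.

Lemma Z_S eta t : Z eta t \subset S eta t.
Proof.
apply/fintype.subsetP => i iZ; rewrite /sea_S /largest inE.
have sub : [set j | beats (sea_X k A (A *m xs) eta 0 t) j i]%classic \subset Z eta t :\ i.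
  apply/fintype.subsetP => j; rewrite in_setE !inE /beats.
  move: iZ; rewrite inE => iZ.
  case: (eqVneq j i) => [->|ji] /=; first by rewrite ltxx eqxx ltnn.
  apply: contraTneq => ->; rewrite normr0 ltNge normr_ge0 /= eq_sym normr_eq0 (negbTE iZ) //.
apply: (leq_ltn_trans (subset_leq_card sub)).
have := cardsD1 i (Z eta t); rewrite iZ add1n => E.
have : (#|Z eta t| <= k)%N by apply: leq_trans hk; apply: subset_leq_card; apply: Z_supp.
by rewrite E.
Qed.

Lemma Z_grow eta t : 0 < eta ->
  (exists2 s, (s < t)%N & vsupp xs \subset S eta s) \/ (t <= #|Z eta t|)%N.
Proof.
move=> eta0; elim: t => [|t [[s st sS]|IH]]; first by right.
- by left; exists s => //; apply: ltnW.
case: (boolP (vsupp xs \subset S eta t)) => H; first by left; exists t.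
right; apply: (leq_ltn_trans IH); apply: proper_card; apply/properP; split.
  apply/fintype.subsetP => i; rewrite !inE sea_XS => iZ.
  have : i \in S eta t by apply: (fintype.subsetP (Z_S eta t)); rewrite inE.
  by move=> ->; rewrite subrr mulr0 subr0.
case/subsetPn: H => i iv iS; exists i.
  rewrite inE sea_XS.
  have -> : sea_X k A (A *m xs) eta 0 t i 0 = 0.
    apply/eqP; apply: contraNT iS => h; apply: (fintype.subsetP (Z_S eta t)); by rewrite inE.
  move: iS => /negbTE ->; rewrite sub0r sub0r mulrN opprK mulf_neq0 //.
    by rewrite gt_eqF.
  by move: iv; rewrite inE.
rewrite inE negbK; apply/eqP.
apply/eqP; apply: contraNT iS => h; apply: (fintype.subsetP (Z_S eta t)); by rewrite inE.
Qed.

End Main.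

Lemma norminf0 (R : realType) n : norminf (0 : 'cV[R]_n) = 0.
Proof.
rewrite /norminf; apply: (big_ind (fun x => x = 0)) => //.
  by move=> a b -> ->; rewrite maxxx.
by move=> i _; rewrite mxE normr0.
Qed.

Theorem corollaryC7 (R : realType) (m n k : nat) (A : 'M[R]_(m, n))
  (xs : 'cV[R]_n) (y : 'cV[R]_m) :
  (0 < k)%N -> (k <= n)%N -> (n <= m)%N ->
  A^T *m A = 1%:M ->
  (#|vsupp xs| <= k)%N ->
  y = A *m xs ->
  (forall (X0 : 'cV[R]_n) (eta : R), 0 < eta ->
     ereal_sup (range (fun t : nat =>
       (norminf (oracle_u eta xs (sea_S k A y eta X0 t)
                 - eta *: (A^T *m (A *m sea_x k A y eta X0 t - y))))%:E)) = 0%E)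
  /\
  (forall (eta : R) (N : nat), 0 < eta -> (k.+1 < N)%N ->
     forall tb : nat, (tb < N)%N ->
       (forall t' : nat, (t' < N)%N ->
          norm2 (A *m sea_x k A y eta 0 tb - y) <= norm2 (A *m sea_x k A y eta 0 t' - y)) ->
       vsupp xs \subset sea_S k A y eta 0 tb /\ sea_x k A y eta 0 tb = xs).
Proof.
move=> k0 kn nm hA hk ->; split.
  move=> X0 eta eta0.
  have E : forall t, oracle_u eta xs (sea_S k A (A *m xs) eta X0 t)
      - eta *: (A^T *m (A *m sea_x k A (A *m xs) eta X0 t - A *m xs)) = 0.
    move=> t; rewrite grad_eq // sea_xE //.
    apply/matrixP => i j; rewrite ord1 !mxE inE.
    case: (i \in sea_S _ _ _ _ _ _) => /=; first by rewrite andbF subrr mulr0 subr0.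
    case: eqP => [->|_] /=; first by rewrite subrr mulr0 subrr.
    by rewrite sub0r mulrN opprK addNr.
  have -> : range (fun t : nat => (norminf (oracle_u eta xs (sea_S k A (A *m xs) eta X0 t)
      - eta *: (A^T *m (A *m sea_x k A (A *m xs) eta X0 t - A *m xs))))%:E) = [set 0%E].
    apply/seteqP; split => z /=.
      case=> t _ <-; by rewrite E norminf0.
    move=> ->; exists 0%N => //; by rewrite E norminf0.
  by rewrite ereal_sup1.
move=> eta N eta0 kN tb tbN hmin.
have [[s sk sS]|] := @Z_grow R m n k A xs hA hk eta k.+1 eta0; last first.
  move=> H; have := leq_trans H (leq_trans (subset_leq_card (@Z_supp R m n k A xs hA eta k.+1)) hk).
  by rewrite ltnn.
have xsE : sea_x k A (A *m xs) eta 0 s = xs.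
  rewrite sea_xE //; apply/matrixP => i j; rewrite ord1 mxE.
  case: ifP => // iS; apply/eqP; rewrite eq_sym; apply: contraFT iS => h.
  by apply: (fintype.subsetP sS); rewrite inE.
have res0 : A *m sea_x k A (A *m xs) eta 0 tb - A *m xs = 0.
  have := hmin s (ltn_trans sk kN); rewrite xsE subrr.
  rewrite /norm2.
  set r := A *m sea_x k A (A *m xs) eta 0 tb - A *m xs.
  have -> : \sum_i (0 : 'cV[R]_m) i 0 ^+ 2 = 0 by rewrite big1 // => i _; rewrite mxE expr0n.
  rewrite sqrtr0 => hle.
  have hs : Num.sqrt (\sum_i r i 0 ^+ 2) = 0 by apply/eqP; rewrite eq_le hle sqrtr_ge0.
  move/eqP: hs; rewrite sqrtr_eq0 => hs.
  have hs0 : \sum_i r i 0 ^+ 2 = 0.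
    by apply/eqP; rewrite eq_le hs sumr_ge0 // => i _; rewrite sqr_ge0.
  have := psumr_eq0P (fun i _ => sqr_ge0 (r i 0)) hs0 => h.
  apply/matrixP => i j; rewrite ord1.
  by have /eqP := h i isT; rewrite sqrf_eq0 => /eqP ->; rewrite mxE.
have xtb : sea_x k A (A *m xs) eta 0 tb = xs.
  by apply/eqP; rewrite -subr_eq0 -(@grad_eq R m n A hA) res0 mulmx0.
split => //.
apply/fintype.subsetP => i; rewrite inE => iv.
apply: contraNT iv => iS; apply/eqP.
have := congr1 (fun v : 'cV[R]_n => v i 0) xtb.
by rewrite sea_xE // mxE (negbTE iS) => <-.
Qed.
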